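(* Let $F,F',G,G'$ be graphs, all with the same vertex set contained in $\{v_1,\ldots,v_n\}$, such that $F\cong F'$, $|E(G)|=|E(G')|$ and $E(F)\cap E(G)=E(F')\cap E(G')=\emptyset$. Then $$\pi\big(F\cup G,\mathfrak C(F,G)\big)=\pi\big(F'\cup G',\mathfrak C(F',G')\big),$$ where $\mathfrak C(F,G)$ denotes the set of all clique covers $\mathcal C$ of $F\cup G$ with $E(G)\subseteq\mathcal C\subseteq\mathcal P(F\cup G)\setminus E(F)$ (edges being regarded as $2$-element vertex sets), and similarly for $\mathfrak C(F',G')$.
   Context: Random intersection graph $\mathcal G(n,m,p)$: vertices $v_1,\ldots,v_n$, attributes $a_1,\ldots,a_m$; each vertex chooses each attribute independently with probability $p$; two vertices are adjacent iff they chose a common attribute. For a graph $H$, $\mathcal P(H)$ is the family of subsets of $V(H)$ containing both ends of at least one edge of $H$. $\mathcal C\subseteq\mathcal P(H)$ is a clique cover of $H$ if every edge of $H$ is contained in some $C\in\mathcal C$. An attribute builds $C\subseteq V(H)$ if all vertices of $C$ and no vertex of $V(H)\setminus C$ chose it. $H$ is given by the clique cover $\mathcal C$ if every $C\in\mathcal C$ is built by some attribute and no $C\in\mathcal P(H)\setminus\mathcal C$ is built by any attribute; $\pi(H,\mathcal C)$ is its probability, and for a family $\mathfrak C$ of clique covers $\pi(H,\mathfrak C)=\sum_{\mathcal C\in\mathfrak C}\pi(H,\mathcal C)$. $F\cup G$ is the graph with vertex set $V(F)\cup V(G)$ and edge set $E(F)\cup E(G)$. *)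

(* Defs.v *)
From mathcomp Require Import all_boot all_order all_algebra.
Set Implicit Arguments. Unset Strict Implicit. Unset Printing Implicit Defensive.
Import Order.TTheory GRing.Theory Num.Theory.
Local Open Scope ring_scope.

(* Vertices v_1..v_n are 'I_n, attributes a_1..a_m are 'I_m.
   An outcome of G(n,m,p) is w : {ffun 'I_n * 'I_m -> bool},
   w (v,a) = true iff vertex v chose attribute a. *)
Definition outcome (n m : nat) := {ffun 'I_n * 'I_m -> bool}.

Definition weight {R : pzRingType} (n m : nat) (p : R) (w : outcome n m) : R :=
  \prod_(x : 'I_n * 'I_m) (if w x then p else 1 - p).

Definition is_graph (n : nat) (V : {set 'I_n}) (E : {set {set 'I_n}}) : Prop :=
  forall e, e \in E -> e \subset V /\ #|e| = 2%N.

Definition graph_iso (n : nat) (V : {set 'I_n}) (E : {set {set 'I_n}})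
    (V' : {set 'I_n}) (E' : {set {set 'I_n}}) : Prop :=
  exists f : 'I_n -> 'I_n,
    {in V &, injective f} /\ f @: V = V' /\ E' = [set f @: e | e : {set 'I_n} in E].

Definition Pset (n : nat) (V : {set 'I_n}) (E : {set {set 'I_n}})
  : {set {set 'I_n}} :=
  [set C : {set 'I_n} | (C \subset V) && [exists e in E, e \subset C]].

Definition clique_cover (n : nat) (V : {set 'I_n}) (E : {set {set 'I_n}})
    (CC : {set {set 'I_n}}) : bool :=
  (CC \subset Pset V E) && [forall e in E, exists C in CC, e \subset C].

Definition builds (n m : nat) (w : outcome n m) (V : {set 'I_n}) (a : 'I_m)
    (C : {set 'I_n}) : bool :=
  [forall v in C, w (v, a)] && [forall v in V :\: C, ~~ w (v, a)].

Definition given_by (n m : nat) (w : outcome n m) (V : {set 'I_n})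
    (E : {set {set 'I_n}}) (CC : {set {set 'I_n}}) : bool :=
  [forall C in CC, exists a, builds w V a C] &&
  [forall C in Pset V E :\: CC, forall a, ~~ builds w V a C].

Definition pi {R : pzRingType} (n m : nat) (p : R) (V : {set 'I_n})
    (E : {set {set 'I_n}}) (CC : {set {set 'I_n}}) : R :=
  \sum_(w : outcome n m | given_by w V E CC) weight p w.

Definition pi_fam {R : pzRingType} (n m : nat) (p : R) (V : {set 'I_n})
    (E : {set {set 'I_n}}) (fam : {set {set {set 'I_n}}}) : R :=
  \sum_(CC in fam) pi m p V E CC.

Definition frakC (n : nat) (V : {set 'I_n}) (EF EG : {set {set 'I_n}})
  : {set {set {set 'I_n}}} :=
  [set CC : {set {set 'I_n}} |
     [&& clique_cover V (EF :|: EG) CC, EG \subset CC &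
         CC \subset Pset V (EF :|: EG) :\: EF]].

(* Main.v *)
Require Import Defs.
From mathcomp Require Import all_boot all_order all_algebra.
Set Implicit Arguments. Unset Strict Implicit. Unset Printing Implicit Defensive.
Import Order.TTheory GRing.Theory Num.Theory.

Lemma bij_ex (T : finType) (X Y : {set T}) : #|X| = #|Y| ->
  exists h : T -> T, {in X &, injective h} /\ {in X, forall x, h x \in Y}.
Proof.
move=> hc.
exists (fun x => nth x (enum Y) (index x (enum X))).
have hi x : x \in X -> index x (enum X) < size (enum Y).
  by move=> xX; rewrite -cardE -hc cardE index_mem mem_enum.
split; last first.
  by move=> x xX; rewrite -mem_enum mem_nth // hi.
move=> x y xX yX /= e.
move: e; rewrite (set_nth_default x (y) (hi y yX)) => /eqP.
rewrite nth_uniq ?enum_uniq ?hi // => /eqP e.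
have xe : x \in enum X by rewrite mem_enum.
have ye : y \in enum X by rewrite mem_enum.
by rewrite -(nth_index x xe) e nth_index.
Qed.

Lemma split_bij (T : finType) (X X1 Y Y1 : {set T}) :
  X1 \subset X -> Y1 \subset Y -> #|X1| = #|Y1| -> #|X| = #|Y| ->
  exists h : T -> T, [/\ {in X &, injective h}, {in X1, forall x, h x \in Y1}
     & {in X :\: X1, forall x, h x \in Y :\: Y1}].
Proof.
move=> sX sY c1 c.
have [h1 [i1 m1]] := bij_ex c1.
have c2 : #|X :\: X1| = #|Y :\: Y1|.
  by rewrite !cardsD (setIidPr sX) (setIidPr sY) c c1.
have [h2 [i2 m2]] := bij_ex c2.
exists (fun x => if x \in X1 then h1 x else h2 x); split.
- move=> x y xX yX /=.
  case: ifP => x1; case: ifP => y1.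
  + by apply: i1.
  + move=> e; have : h2 y \in Y :\: Y1 by apply: m2; rewrite inE y1.
    by rewrite -e inE m1.
  + move=> e; have : h2 x \in Y :\: Y1 by apply: m2; rewrite inE x1.
    by rewrite e inE m1.
  + by apply: i2; rewrite inE ?x1 ?y1.
- by move=> x x1 /=; rewrite x1 m1.
- move=> x; rewrite inE => /andP[x1 xX] /=; rewrite (negbTE x1) m2 //.
  by rewrite inE x1.
Qed.

Definition Sa (n m : nat) (V : {set 'I_n}) (w : outcome n m) (a : 'I_m) : {set 'I_n} :=
  [set v in V | w (v, a)].

Definition Q (n m : nat) (V : {set 'I_n}) (EF EG : {set {set 'I_n}}) (w : outcome n m) : bool :=
  [&& [forall e in EF, exists a, (e \subset Sa V w a) && (Sa V w a != e)],
      [forall g in EG, exists a, Sa V w a == g] &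
      [forall a, Sa V w a \notin EF]].

Definition Bw (n m : nat) (V : {set 'I_n}) (E : {set {set 'I_n}}) (w : outcome n m) :=
  [set C in Pset V E | [exists a, Sa V w a == C]].

Lemma builds_S (n m : nat) (w : outcome n m) (V : {set 'I_n}) (a : 'I_m) (C : {set 'I_n}) : C \subset V ->
  builds w V a C = (Sa V w a == C).
Proof.
move=> CV; rewrite /builds; apply/andP/eqP.
- case=> /forallP h1 /forallP h2; apply/setP => v; rewrite !inE.
  case vC: (v \in C).
  + by have := h1 v; rewrite vC /= => ->; rewrite (subsetP CV).
  + case vV: (v \in V) => //=.
    by have := h2 v; rewrite !inE vC vV /= => /negbTE.
- move=> <-; split; apply/forallP => v; rewrite !inE.
  + by apply/implyP => /andP[_ ->].
  + by apply/implyP => /andP[/negP h vV]; apply/negP => wv; apply: h; rewrite vV.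
Qed.

Lemma SaV (n m : nat) (V : {set 'I_n}) (w : outcome n m) (a : 'I_m) : Sa V w a \subset V.
Proof. by apply/subsetP => v; rewrite inE => /andP[]. Qed.

Lemma frak_given_iff (n m : nat) (V : {set 'I_n}) (EF EG : {set {set 'I_n}}) (w : outcome n m) CC :
  (forall e, e \in EF -> e \subset V) -> (forall e, e \in EG -> e \subset V) ->
  ((CC \in frakC V EF EG) && given_by w V (EF :|: EG) CC) = (Q V EF EG w && (CC == Bw V (EF :|: EG) w)).
Proof.
move=> hF hG.
have inP e : e \in EF :|: EG -> e \in Pset V (EF :|: EG).
  move=> eE; rewrite inE; apply/andP; split.
    by case/setUP: eE => [/hF|/hG].
  by apply/existsP; exists e; rewrite eE subxx.
have SaP a e : e \in EF :|: EG -> e \subset Sa V w a -> Sa V w a \in Pset V (EF :|: EG).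
  move=> eE es; rewrite inE SaV /=; apply/existsP; exists e; by rewrite eE.
apply/andP/andP.
- rewrite inE => -[/and3P[/andP[ccP /forallP cov] sG sF] /andP[/forallP bu /forallP nb]].
  have ccS C : C \in CC -> exists a, Sa V w a = C.
    move=> CC1; have := bu C; rewrite CC1 /= => /existsP[a].
    have CP : C \in Pset V (EF :|: EG) by apply: (subsetP ccP).
    move: CP; rewrite inE => /andP[CV _].
    by rewrite builds_S // => /eqP; exists a.
  have nS C a : C \in Pset V (EF :|: EG) -> C \notin CC -> Sa V w a != C.
    move=> CP nC; have := nb C; rewrite inE nC CP /= => /forallP /(_ a).
    move: CP; rewrite inE => /andP[CV _].
    by rewrite builds_S.
  have eqB : CC = Bw V (EF :|: EG) w.
    apply/setP => C; rewrite inE; apply/idP/andP.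
      move=> C1; split; first exact: (subsetP ccP).
      by have [a <-] := ccS C C1; apply/existsP; exists a.
    case=> CP /existsP[a /eqP e]; apply/negPn/negP => nC.
    by have := nS C a CP nC; rewrite e eqxx.
  split; last by rewrite eqB.
  apply/and3P; split.
  + apply/forallP => e; apply/implyP => eF.
    have := cov e; rewrite inE eF /= => /existsP[C /andP[C1 eC]].
    have [a Ce] := ccS C C1; apply/existsP; exists a; rewrite Ce eC /=.
    apply/negP => /eqP Cee; have := subsetP sF C C1; rewrite inE Cee eF //.
  + apply/forallP => g; apply/implyP => gG.
    have [a Ce] := ccS g (subsetP sG g gG).
    by apply/existsP; exists a; rewrite Ce.
  + apply/forallP => a; apply/negP => SF.
    have eP : Sa V w a \in Pset V (EF :|: EG) by apply: inP; rewrite inE SF.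
    have nC : Sa V w a \notin CC.
      by apply/negP => /(subsetP sF); rewrite inE SF.
    by have := nS _ a eP nC; rewrite eqxx.
- case=> /and3P[/forallP qF /forallP qG /forallP qN] /eqP ->.
  split.
  + rewrite inE; apply/and3P; split.
    * apply/andP; split; first by apply/subsetP => C; rewrite inE => /andP[].
      apply/forallP => e; apply/implyP => eE; case/setUP: (eE) => [eF|eG].
        have := qF e; rewrite eF /= => /existsP[a /andP[es _]].
        apply/existsP; exists (Sa V w a); rewrite es andbT inE (SaP a e) //.
        by apply/existsP; exists a.
      have := qG e; rewrite eG /= => /existsP[a /eqP ea].
      apply/existsP; exists e; rewrite subxx andbT inE inP //.
      by apply/existsP; exists a; rewrite ea.
    * apply/subsetP => g gG; have := qG g; rewrite gG /= => /existsP[a /eqP ea].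
      rewrite inE inP ?inE ?gG ?orbT //.
      by apply/existsP; exists a; rewrite ea.
    * apply/subsetP => C; rewrite !inE => /andP[CP /existsP[a /eqP ea]].
      by rewrite CP andbT -ea qN.
  + apply/andP; split.
    * apply/forallP => C; apply/implyP; rewrite inE => /andP[CP /existsP[a /eqP ea]].
      apply/existsP; exists a; rewrite builds_S ?ea //.
      by move: CP; rewrite inE => /andP[].
    * apply/forallP => C; apply/implyP; rewrite in_setD => /andP[nB CP].
      apply/forallP => a; move: (CP); rewrite inE => /andP[CV _].
      rewrite builds_S //; apply/negP => /eqP ea.
      by move: nB; rewrite inE CP /=; case/negP; apply/existsP; exists a; rewrite ea.
Qed.
Local Open Scope ring_scope.

Lemma pi_fam_Q (R : realFieldType) (n m : nat) (p : R) (V : {set 'I_n}) (EF EG : {set {set 'I_n}}) :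
  (forall e, e \in EF -> e \subset V) -> (forall e, e \in EG -> e \subset V) ->
  pi_fam m p V (EF :|: EG) (frakC V EF EG) = \sum_(w : outcome n m | Q V EF EG w) weight p w.
Proof.
move=> hF hG; rewrite /pi_fam /Defs.pi.
transitivity (\sum_(CC : {set {set 'I_n}}) \sum_(w : outcome n m)
   (if (CC \in frakC V EF EG) && given_by w V (EF :|: EG) CC then weight p w else 0)).
  rewrite big_mkcond; apply: eq_bigr => CC _; case: ifP => h.
    by rewrite big_mkcond; apply: eq_bigr => w _.
  by rewrite big1 // => w _; rewrite h.
rewrite exchange_big [RHS]big_mkcond; apply: eq_bigr => w _.
under eq_bigr do rewrite frak_given_iff //.
case: (Q V EF EG w) => /=.
  rewrite (bigD1 (Bw V (EF :|: EG) w)) //= eqxx big1 ?addr0 // => CC /negbTE -> //.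
by rewrite big1.
Qed.

Lemma weight_col (R : realFieldType) (n m : nat) (p : R) (w : outcome n m) :
  weight p w = \prod_(a : 'I_m) (p ^+ #|[set v | w (v, a)]| * (1 - p) ^+ #|~: [set v | w (v, a)]|).
Proof.
have -> : weight p w = \prod_(v : 'I_n) \prod_(a : 'I_m) (if w (v, a) then p else 1 - p).
  by rewrite /weight pair_big; apply: eq_bigr => -[v a].
rewrite exchange_big; apply: eq_bigr => a _.
rewrite (bigID (fun v => w (v, a))) /=.
congr (_ * _).
  rewrite (eq_bigr (fun _ => p)); last by move=> v ->.
  rewrite -prodr_const; apply: eq_bigl => v; by rewrite inE.
rewrite (eq_bigr (fun _ => 1 - p)); last by move=> v /negbTE ->.
rewrite -prodr_const; apply: eq_bigl => v; by rewrite !inE.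
Qed.

Lemma weight_eq (R : realFieldType) (n m : nat) (p : R) (w1 w2 : outcome n m) :
  (forall a, #|[set v | w1 (v, a)]| = #|[set v | w2 (v, a)]|) -> weight p w1 = weight p w2.
Proof.
move=> h; rewrite !weight_col; apply: eq_bigr => a _.
have hC : #|~: [set v | w1 (v, a)]| = #|~: [set v | w2 (v, a)]|.
  by apply/eqP; rewrite -(eqn_add2l #|[set v | w1 (v, a)]|) cardsC h cardsC.
by rewrite h hC.
Qed.

Definition Phi (n : nat) (s : {set 'I_n} -> {set 'I_n}) (V X : {set 'I_n}) :=
  s (X :&: V) :|: (X :\: V).

Definition Psi (n m : nat) (s : {set 'I_n} -> {set 'I_n}) (V : {set 'I_n}) (w : outcome n m) : outcome n m :=
  [ffun x : 'I_n * 'I_m => x.1 \in Phi s V [set v | w (v, x.2)]].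

Lemma transfer (R : realFieldType) (n m : nat) (p : R) (V : {set 'I_n})
  (EF EG EF2 EG2 : {set {set 'I_n}}) (s : {set 'I_n} -> {set 'I_n}) :
  (forall T1 T2 : {set 'I_n}, T1 \subset V -> T2 \subset V -> s T1 = s T2 -> T1 = T2) ->
  (forall T : {set 'I_n}, T \subset V -> s T \subset V) ->
  (forall T : {set 'I_n}, T \subset V -> #|s T| = #|T|) ->
  (forall e, e \in EF -> e \subset V) -> (forall e, e \in EG -> e \subset V) ->
  EF2 = s @: EF -> EG2 = s @: EG ->
  (forall e T : {set 'I_n}, e \in EF -> T \subset V -> T != e -> (s e \subset s T) = (e \subset T)) ->
  \sum_(w : outcome n m | Q V EF EG w) weight p w = \sum_(w : outcome n m | Q V EF2 EG2 w) weight p w.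
Proof.
move=> sinj sV scard hF hG -> -> ssub.
have hinj (T1 T2 : {set 'I_n}) : T1 \subset V -> T2 \subset V -> (s T1 == s T2) = (T1 == T2).
  move=> h1 h2; apply/eqP/eqP => [|->] //; exact: sinj.
have PhiV (X : {set 'I_n}) : Phi s V X :&: V = s (X :&: V).
  apply/setP => v; rewrite !inE; case vs: (v \in s (X :&: V)) => /=.
    by rewrite (subsetP (sV _ (subsetIr X V))).
  by case: (v \in V); rewrite ?andbF.
have PhiD (X : {set 'I_n}) : Phi s V X :\: V = X :\: V.
  apply/setP => v; rewrite /Phi in_setD in_setU in_setD.
  case vV: (v \in V) => //=.
  have -> : (v \in s (X :&: V)) = false.
    by apply/negP => /(subsetP (sV _ (subsetIr X V))); rewrite vV.
  by [].
have Phiinj : injective (Phi s V).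
  move=> X Y e.
  have e1 : X :&: V = Y :&: V by apply: sinj; rewrite ?subsetIr // -!PhiV e.
  have e2 : X :\: V = Y :\: V by rewrite -PhiD e PhiD.
  apply/setP => v; case vV: (v \in V).
    by move/setP: e1 => /(_ v); rewrite !inE vV !andbT.
  by move/setP: e2 => /(_ v); rewrite !inE vV.
have Phicard (X : {set 'I_n}) : #|Phi s V X| = #|X|.
  by rewrite -(cardsID V (Phi s V X)) PhiV PhiD scard ?subsetIr // cardsID.
have colPsi (w : outcome n m) (a : 'I_m) : [set v | Psi s V w (v, a)] = Phi s V [set v | w (v, a)].
  by apply/setP => v; rewrite inE ffunE.
have SaE (w : outcome n m) (a : 'I_m) : Sa V w a = [set v | w (v, a)] :&: V.
  by apply/setP => v; rewrite !inE andbC.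
have SaPsi (w : outcome n m) (a : 'I_m) : Sa V (Psi s V w) a = s (Sa V w a).
  by rewrite !SaE colPsi PhiV.
have Psiinj : injective (Psi s V : outcome n m -> outcome n m).
  move=> w1 w2 e; apply/ffunP => -[v a].
  have : [set v | w1 (v, a)] = [set v | w2 (v, a)].
    by apply: Phiinj; rewrite -!colPsi e.
  by move/setP => /(_ v); rewrite !inE.
rewrite [RHS](reindex_inj Psiinj) /=; apply: eq_big => w; last first.
  move=> _; apply: weight_eq => a.
  by rewrite colPsi Phicard.
symmetry; rewrite /Q; congr [&& _, _ & _].
- apply/forallP/forallP => H e.
  + apply/implyP => eF; have := H (s e); rewrite imset_f //= => /existsP[a].
    rewrite SaPsi => /andP[h1 h2]; apply/existsP; exists a.
    rewrite hinj ?SaV ?hF // in h2.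
    by rewrite h2 andbT -(ssub e (Sa V w a) eF (SaV _ _ _) h2).
  + apply/implyP => /imsetP[e' eF ->]; have := H e'; rewrite eF => /existsP[a /andP[h1 h2]].
    apply/existsP; exists a; rewrite SaPsi ssub ?SaV // h1 /=.
    by rewrite hinj ?SaV ?hF.
- apply/forallP/forallP => H e.
  + apply/implyP => eG; have := H (s e); rewrite imset_f //= => /existsP[a].
    rewrite SaPsi hinj ?SaV ?hG // => h; by apply/existsP; exists a.
  + apply/implyP => /imsetP[e' eG ->]; have := H e'; rewrite eG => /existsP[a h].
    by apply/existsP; exists a; rewrite SaPsi hinj ?SaV ?hG.
- apply: eq_forallb => a; rewrite SaPsi; congr negb.
  apply/imsetP/idP => [[e eF /eqP]|h]; last by exists (Sa V w a).
  by rewrite hinj ?SaV ?hF // => /eqP ->.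
Qed.

Lemma imset_sub_iff (n : nat) (V : {set 'I_n}) (f : 'I_n -> 'I_n) (T1 T2 : {set 'I_n}) :
  {in V &, injective f} -> T1 \subset V -> T2 \subset V ->
  (f @: T1 \subset f @: T2) = (T1 \subset T2).
Proof.
move=> finj h1 h2; apply/idP/idP; last exact: imsetS.
move=> h; apply/subsetP => x xT1.
have : f x \in f @: T2 by apply: (subsetP h); exact: imset_f.
case/imsetP => y yT2 e.
by rewrite (finj x y (subsetP h1 x xT1) (subsetP h2 y yT2) e).
Qed.

Lemma imset_inj_sub (n : nat) (V : {set 'I_n}) (f : 'I_n -> 'I_n) (T1 T2 : {set 'I_n}) :
  {in V &, injective f} -> T1 \subset V -> T2 \subset V -> f @: T1 = f @: T2 -> T1 = T2.
Proof.
move=> finj h1 h2 e; apply/eqP; rewrite eqEsubset.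
by rewrite -(imset_sub_iff finj h1 h2) -(imset_sub_iff finj h2 h1) e subxx.
Qed.

Lemma stage1 (R : realFieldType) (n m : nat) (p : R) (V : {set 'I_n})
  (EF EG : {set {set 'I_n}}) (f : 'I_n -> 'I_n) :
  {in V &, injective f} -> f @: V = V ->
  (forall e, e \in EF -> e \subset V) -> (forall e, e \in EG -> e \subset V) ->
  \sum_(w : outcome n m | Q V EF EG w) weight p w =
  \sum_(w : outcome n m | Q V [set f @: e | e : {set 'I_n} in EF] [set f @: e | e : {set 'I_n} in EG] w) weight p w.
Proof.
move=> finj fV hF hG.
apply: (@transfer R n m p V EF EG _ _ (fun T => f @: T)) => //.
- by move=> T1 T2 h1 h2; apply: imset_inj_sub finj h1 h2.
- by move=> T TV; rewrite -fV imsetS.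
- move=> T TV; rewrite card_in_imset // => x y xT yT; apply: finj; exact: (subsetP TV).
- move=> e T eF TV _; apply: imset_sub_iff finj (hF e eF) TV.
Qed.

Lemma stage2 (R : realFieldType) (n m : nat) (p : R) (V : {set 'I_n})
  (EF EG EG' : {set {set 'I_n}}) :
  is_graph V EF -> (forall e, e \in EG -> e \subset V /\ #|e| = 2%N) -> is_graph V EG' ->
  #|EG| = #|EG'| -> EF :&: EG = set0 -> EF :&: EG' = set0 ->
  \sum_(w : outcome n m | Q V EF EG w) weight p w =
  \sum_(w : outcome n m | Q V EF EG' w) weight p w.
Proof.
move=> hF hG hG' hc hd hd'.
pose D := [set T : {set 'I_n} | (T \subset V) && (#|T| == 2%N)] :\: EF.
have notin E (x : {set 'I_n}) : EF :&: E = set0 -> x \in E -> x \notin EF.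
  move=> h xE; apply/negP => xF.
  have : x \in EF :&: E by rewrite inE xF xE.
  by rewrite h inE.
have sG : EG \subset D.
  apply/subsetP => x xG; have [xV xc] := hG x xG.
  by rewrite !inE xV xc eqxx (notin EG) //.
have sG' : EG' \subset D.
  apply/subsetP => x xG; have [xV xc] := hG' x xG.
  by rewrite !inE xV xc eqxx (notin EG') //.
have [h [hinj hm1 hm2]] := split_bij sG sG' hc erefl.
have hD x : x \in D -> h x \in D.
  move=> xD; case xG: (x \in EG).
    by apply: (subsetP sG'); apply: hm1.
  by have := hm2 x; rewrite inE xG xD => /(_ isT); rewrite inE => /andP[].
have DV x : x \in D -> x \subset V /\ #|x| = 2%N.
  by rewrite !inE => /andP[_ /andP[-> /eqP ->]].
pose t := fun T => if T \in D then h T else T.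
have tEF e : e \in EF -> t e = e.
  by move=> eF; rewrite /t inE eF.
apply: (@transfer R n m p V EF EG EF EG' t).
- move=> T1 T2 _ _; rewrite /t.
  case: ifP => d1; case: ifP => d2.
  + exact: hinj.
  + by move=> e; have := hD _ d1; rewrite e d2.
  + by move=> e; have := hD _ d2; rewrite -e d1.
  + by [].
- by move=> T TV; rewrite /t; case: ifP => // d; have [] := DV _ (hD _ d).
- move=> T TV; rewrite /t; case: ifP => // d.
  by have [_ ->] := DV _ (hD _ d); have [_ ->] := DV _ d.
- by move=> e eF; have [] := hF e eF.
- by move=> e eG; have [] := hG e eG.
- apply/setP => x; apply/idP/imsetP => [xE | [y yE ->]].
    by exists x; rewrite ?tEF.
  by rewrite tEF.
- apply/esym/eqP; rewrite eqEcard; apply/andP; split.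
    apply/subsetP => x /imsetP[y yG ->]; rewrite /t (subsetP sG) //.
    exact: hm1.
  rewrite card_in_imset -?hc //.
  move=> x y xG yG; rewrite /t !(subsetP sG) //; apply: hinj; exact: (subsetP sG).
- move=> e T eF TV Te; rewrite tEF // /t; case: ifP => // d.
  have [eV ec] := hF e eF.
  have [_ Tc] := DV _ d; have [_ hc2] := DV _ (hD _ d).
  have enD : e \notin D by rewrite inE eF.
  transitivity false.
    apply/negP => es.
    have : e == h T by rewrite eqEcard es ec hc2.
    by move/eqP => ee; move: enD; rewrite ee hD.
  apply/esym/negP => es.
  have : e == T by rewrite eqEcard es ec Tc.
  by rewrite eq_sym (negbTE Te).
Qed.

Theorem corollary5p3 (R : realFieldType) (n m : nat) (p : R)
    (hp0 : 0 <= p) (hp1 : p <= 1)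
    (V : {set 'I_n}) (EF EG EF' EG' : {set {set 'I_n}})
    (hF : is_graph V EF) (hG : is_graph V EG)
    (hF' : is_graph V EF') (hG' : is_graph V EG')
    (hiso : graph_iso V EF V EF')
    (hcard : #|EG| = #|EG'|)
    (hdisj : EF :&: EG = set0) (hdisj' : EF' :&: EG' = set0) :
  pi_fam m p V (EF :|: EG) (frakC V EF EG) =
  pi_fam m p V (EF' :|: EG') (frakC V EF' EG').
Proof.
have sub (E : {set {set 'I_n}}) : is_graph V E -> forall e, e \in E -> e \subset V.
  by move=> hE e eE; have [] := hE e eE.
rewrite (pi_fam_Q _ _ (sub _ hF) (sub _ hG)) (pi_fam_Q _ _ (sub _ hF') (sub _ hG')).
case: hiso => f [finj [fV eF']].
rewrite (stage1 m p finj fV (sub _ hF) (sub _ hG)) -eF'.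
apply: stage2 => //.
- move=> x /imsetP[g gG ->]; have [gV gc] := hG g gG; split.
    by rewrite -fV imsetS.
  rewrite card_in_imset // => x1 y1 x1g y1g; apply: finj; exact: (subsetP gV).
- rewrite card_in_imset // => x1 y1 x1g y1g; apply: imset_inj_sub finj _ _.
    exact: sub hG _ x1g.
  exact: sub hG _ y1g.
- rewrite eF'; apply/setP => x; rewrite in_setI in_set0; apply/negP => /andP[/imsetP[e eF ->] /imsetP[g gG]].
  move=> /(imset_inj_sub finj (sub _ hF _ eF) (sub _ hG _ gG)) eg.
  have : e \in EF :&: EG by rewrite inE eF eg gG.
  by rewrite hdisj inE.
Qed.
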